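(* If $E\subseteq\mathbb{R}$ is a non-empty weakly nowhere dense $G_\delta$ set, then there exist points $x\in E$ which are neither left density points nor right density points of $E$.
   Context: $|A|$ denotes Lebesgue measure. A set $E\subseteq\mathbb{R}$ is weakly nowhere dense if for every (nondegenerate) interval $J$ the set $E\cap J$ does not have full measure in $J$. A point $x$ is a left (resp. right) density point of $E$ if for every sequence of intervals $I_n=[x-r_n,x]$ (resp. $I_n=[x,x+r_n]$) with $r_n\searrow0$ we have $|E\cap I_n|/|I_n|\to1$. *)

(* Defs.v *)
From HB Require Import structures.
From mathcomp Require Import all_boot all_order all_algebra.
From mathcomp Require Import all_classical all_reals all_analysis borel_hierarchy.
Set Implicit Arguments. Unset Strict Implicit. Unset Printing Implicit Defensive.
Import Order.TTheory GRing.Theory Num.Theory.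
Import numFieldNormedType.Exports.
Local Open Scope classical_set_scope.
Local Open Scope ring_scope.

(* E is weakly nowhere dense: for every nondegenerate interval J, E ∩ J does
   not have full measure in J, i.e. |E ∩ J| < |J|.  It suffices (and is
   equivalent) to range over closed bounded intervals [a,b], a < b. *)
Definition weakly_nowhere_dense {R : realType} (E : set R) : Prop :=
  forall a b : R, a < b ->
    (lebesgue_measure (E `&` `[a, b]) < (b - a)%:E)%E.

Definition left_density_point {R : realType} (E : set R) (x : R) : Prop :=
  forall r : R^nat, (forall n, 0 < r n) -> nonincreasing_seq r ->
    r @ \oo --> (0 : R) ->
    (fun n => fine (lebesgue_measure (E `&` `[x - r n, x])) / r n) @ \oo --> (1 : R).

Definition right_density_point {R : realType} (E : set R) (x : R) : Prop :=
  forall r : R^nat, (forall n, 0 < r n) -> nonincreasing_seq r ->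
    r @ \oo --> (0 : R) ->
    (fun n => fine (lebesgue_measure (E `&` `[x, x + r n])) / r n) @ \oo --> (1 : R).

(* Main.v *)
Require Import Defs.
From mathcomp Require Import all_boot all_order all_algebra.
From mathcomp Require Import all_classical all_reals all_analysis borel_hierarchy.
From mathcomp Require Import lra ring.
Set Implicit Arguments. Unset Strict Implicit. Unset Printing Implicit Defensive.
Import Order.TTheory GRing.Theory Num.Theory.
Import numFieldNormedType.Exports.
Local Open Scope classical_set_scope.
Local Open Scope ring_scope.
Section S.
Context {R : realType}.
Local Notation mu := (@lebesgue_measure R).

Lemma mu_cc (a b : R) : a <= b -> mu `[a, b] = (b - a)%:E.
Proof.
move=> ab; rewrite lebesgue_measure_itv /=.
case: ifPn; rewrite lte_fin => h; first by rewrite EFinB.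
have -> : a = b by apply/eqP; rewrite eq_le ab leNgt h.
by rewrite subrr.
Qed.

Lemma mu_sub3 (E : set R) (a b c d : R) : measurable E ->
  a <= b -> b <= c -> c <= d ->
  (mu (E `&` `[a, d]) <= mu (E `&` `[b, c]) + ((b - a) + (d - c))%:E)%E.
Proof.
move=> mE ab bc cd.
have sub : E `&` `[a, d] `<=` (`[a, b] `|` (E `&` `[b, c])) `|` `[c, d].
  move=> x [Ex]; rewrite /= in_itv /= => /andP[ax xd].
  have ii : forall u v : R, u <= x -> x <= v -> `[u, v]%classic x by move=> u v ux xv; rewrite /= in_itv /= ux xv.
  have [xb|bx] := leP x b; first by left; left; exact: ii.
  have [xc|cx] := leP x c; first by left; right; split=> //; apply: ii => //; exact: ltW.
  by right; apply: ii => //; exact: ltW.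
have mI : forall u v : R, measurable (E `&` `[u, v]) by move=> u v; exact: measurableI.
apply: (@le_trans _ _ (mu ((`[a, b] `|` (E `&` `[b, c])) `|` `[c, d]))).
  apply: le_measure; [rewrite inE; exact: mI| |exact: sub].
  by rewrite inE; apply: measurableU; [apply: measurableU|] => //; exact: mI.
have mU : measurable (`[a, b] `|` (E `&` `[b, c])) by apply: measurableU => //; exact: mI.
have h1 := @measureU2 _ _ _ mu (`[a, b] `|` (E `&` `[b, c])) `[c, d] mU (measurable_itv _).
have h2 := @measureU2 _ _ _ mu `[a, b] (E `&` `[b, c]) (measurable_itv _) (mI b c).
have e1 : forall u v : R, u <= v -> (mu `[u, v] <= (v - u)%:E)%E.
  by move=> u v uv; rewrite mu_cc.
apply: (le_trans h1); rewrite EFinD addeA; apply: leeD; last exact: e1.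
by apply: (le_trans h2); rewrite addeC; apply: leeD => //; exact: e1.
Qed.

End S.
Section S2.
Context {R : realType}.
Local Notation mu := (@lebesgue_measure R).

Lemma dens_small (E : set R) z (mE : measurable E) :
  (mu (E `&` ball z r) * (mu (ball z r))^-1)%E @[r --> 0^'+] --> 0%:E ->
  forall b, 0 < b -> exists s, [/\ 0 < s, s < b & (mu (E `&` ball z s) < (s / 4)%:E)%E].
Proof.
move=> H b b0.
have H1 : \forall r \near 0^'+, (mu (E `&` ball z r) * (mu (ball z r))^-1 < (1/8)%:E)%E.
  apply: (H [set u | (u < (1/8)%:E)%E]); apply: open_ereal_lt'; rewrite lte_fin; lra.
have [s [[s0 sb] hs]] := filter_ex (filterI (filterI (nbhs_right_gt 0) (nbhs_right_lt b0)) H1).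
exists s; split => //.
have s0' : 0 <= s by exact: ltW.
rewrite lebesgue_measure_ball // in hs.
have mb : measurable (ball z s) by by rewrite ball_itv; exact: measurable_itv.
have le1 : (mu (E `&` ball z s) <= mu (ball z s))%E.
  apply: le_measure; rewrite ?inE //; try exact: subIsetr; exact: measurableI.
have finm : mu (E `&` ball z s) \is a fin_num.
  by rewrite ge0_fin_numE //; apply: (le_lt_trans le1); rewrite lebesgue_measure_ball // ltry.
move: hs; rewrite -(fineK finm) inver ifF; last by apply/negbTE; rewrite mulrn_eq0 /= gt_eqF.
rewrite -EFinM !lte_fin ltr_pdivrMr; last by rewrite mulrn_wgt0.
move=> h; rewrite mulr2n in h; lra.
Qed.
End S2.
Section S3.
Context {R : realType}.
Local Notation mu := (@lebesgue_measure R).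

Lemma mU2 (A B : set R) : measurable A -> measurable B ->
  (mu (A `|` B) <= mu A + mu B)%E.
Proof. by move=> mA mB; exact: measureU2. Qed.

Lemma find_z (E : set R) (mE : measurable E) (u v : R) : u < v ->
  (mu (E `&` `[u, v]) < (v - u)%:E)%E ->
  exists z, [/\ u <= z, z <= v, ~ E z &
    (mu (E `&` ball z r) * (mu (ball z r))^-1)%E @[r --> 0^'+] --> 0%:E].
Proof.
move=> uv hE.
have [N [mN N0 subN]] := lebesgue_density mE.
apply: contrapT => nz.
have sub : `[u, v] `<=` (E `&` `[u, v]) `|` N.
  move=> x xuv; case: (pselect (E x)) => Ex; [by left|right].
  apply: subN => /= Px; apply: nz; exists x.
  move: (xuv); rewrite /= in_itv /= => /andP[ux xv]; split => //.
  by move: Px; rewrite indicE memNset.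
have mI : measurable (E `&` `[u, v]) by exact: measurableI.
have h1 := mU2 mI mN.
have h2 : (mu `[u, v] <= mu ((E `&` `[u, v]) `|` N))%E.
  by apply: le_measure; rewrite ?inE //; apply: measurableU.
move: (le_trans h2 h1); rewrite N0 adde0 mu_cc ?(ltW uv) // => h3.
by move: (le_lt_trans h3 hE); rewrite ltxx.
Qed.
End S3.
Section S4.
Context {R : realType}.
Local Notation mu := (@lebesgue_measure R).

Lemma le_mu (A B : set R) : measurable A -> measurable B -> A `<=` B ->
  (mu A <= mu B)%E.
Proof. by move=> mA mB AB; apply: le_measure; rewrite ?inE. Qed.

Lemma mball (z s : R) : measurable (ball z s).
Proof. by rewrite ball_itv; exact: measurable_itv. Qed.

Lemma cc_oo (a b c d : R) : c < a -> b < d -> `[a, b] `<=` `]c, d[.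
Proof.
move=> ca bd x; rewrite /= !in_itv /= => /andP[ax xb].
apply/andP; split; [exact: (lt_le_trans ca)|exact: (le_lt_trans xb)].
Qed.

Lemma cc_cc (a b c d : R) : c <= a -> b <= d -> `[a, b] `<=` `[c, d].
Proof.
move=> ca bd x; rewrite /= !in_itv /= => /andP[ax xb].
apply/andP; split; [exact: (le_trans ca)|exact: (le_trans xb)].
Qed.

Lemma in_cc (a b x : R) : (`[a, b]%classic x) <-> (a <= x /\ x <= b).
Proof. by rewrite /= in_itv /=; split => [/andP[]|[-> ->]]. Qed.

Lemma core_left (E : set R) (mE : measurable E) (wnd : weakly_nowhere_dense E)
  (x0 : R) (Ex0 : E x0) (eta rho : R) : 0 < eta -> 0 < rho ->
  exists y r, [/\ E y, x0 - eta < y < x0 + eta, 0 < r, r < rho &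
    (mu (E `&` `[(y - r)%R, y]) < (r / 2)%:E)%E].
Proof.
move=> eta0 rho0.
set h := Num.min eta rho / 2.
have := le_refl (Num.min eta rho); rewrite le_min => /andP[m1 m2].
have : 0 < Num.min eta rho by rewrite lt_min eta0 rho0.
move=> m0.
have h0 : 0 < h by rewrite /h; lra.
have heta : h < eta by rewrite /h; lra.
have hrho : h < rho by rewrite /h; lra.
have hlt : x0 - h < x0 by lra.
have hw := wnd _ _ hlt.
have [z [hz1 hz2 nEz dz]] := find_z mE hlt hw.
have zx0 : z < x0.
  by rewrite lt_neqAle hz2 andbT; apply/negP => /eqP zx; apply: nEz; rewrite zx.
set S := E `&` `[z, x0].
have Sx0 : S x0 by split => //; apply/in_cc; split => //; exact: ltW.
have lbS : lbound S z by move=> w [_ /in_cc []].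
have hinf : has_inf S by split; [exists x0|exists z].
set t := inf S.
have zt : z <= t by apply: lb_le_inf => //; exists x0.
have tS : forall w, S w -> t <= w by move=> w Sw; apply: ge_inf => //; exists z.
have mI : forall a b : R, measurable (E `&` `[a, b]) by move=> a b; exact: measurableI.
have [zt'|tz] := ltrP z t.
  have eps0 : 0 < (t - z) / 2 by lra.
  have [e Se et] := inf_adherent eps0 hinf.
  have te := tS _ Se.
  case: Se => Ee /in_cc [ze ex0].
  exists e, (e - z); split => //.
  - apply/andP; split; lra.
  - lra.
  - lra.
  - have -> : e - (e - z) = z by ring.
    apply: (le_lt_trans (le_mu (mI _ _) (measurable_itv `[t, e]) _)).
      move=> w [Ew /in_cc [zw we]]; apply/in_cc; split => //.
      by apply: tS; split => //; apply/in_cc; split => //; exact: (le_trans we).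
    rewrite mu_cc ?lte_fin; lra.
have tz' : t = z by apply/eqP; rewrite eq_le tz zt.
have [s [s0 sh hs]] := dens_small mE dz h0.
have s20 : 0 < s / 2 by lra.
have [e Se et] := inf_adherent s20 hinf.
rewrite -/t tz' in et.
case: Se => Ee /in_cc [ze ex0].
have ze' : z < e.
  by rewrite lt_neqAle ze andbT; apply/negP => /eqP zx; apply: nEz; rewrite zx.
exists e, (e - z + s / 2); split => //.
- apply/andP; split; lra.
- lra.
- lra.
- apply: (le_lt_trans (le_mu (mI _ _) (measurableI _ _ mE (mball z s)) _)).
  + apply: setIS; rewrite ball_itv; apply: cc_oo; lra.
  + apply: (lt_trans hs); rewrite lte_fin; lra.
Qed.
End S4.
Section S5.
Context {R : realType}.
Local Notation mu := (@lebesgue_measure R).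

Lemma core_right (E : set R) (mE : measurable E) (wnd : weakly_nowhere_dense E)
  (x0 : R) (Ex0 : E x0) (eta rho : R) : 0 < eta -> 0 < rho ->
  exists y r, [/\ E y, x0 - eta < y < x0 + eta, 0 < r, r < rho &
    (mu (E `&` `[y, (y + r)%R]) < (r / 2)%:E)%E].
Proof.
move=> eta0 rho0.
set h := Num.min eta rho / 2.
have := le_refl (Num.min eta rho); rewrite le_min => /andP[m1 m2].
have : 0 < Num.min eta rho by rewrite lt_min eta0 rho0.
move=> m0.
have h0 : 0 < h by rewrite /h; lra.
have heta : h < eta by rewrite /h; lra.
have hrho : h < rho by rewrite /h; lra.
have hlt : x0 < x0 + h by lra.
have hw := wnd _ _ hlt.
have [z [hz1 hz2 nEz dz]] := find_z mE hlt hw.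
have zx0 : x0 < z.
  by rewrite lt_neqAle hz1 andbT; apply/negP => /eqP zx; apply: nEz; rewrite -zx.
set S := E `&` `[x0, z].
have Sx0 : S x0 by split => //; apply/in_cc; split => //; exact: ltW.
have ubS : ubound S z by move=> w [_ /in_cc []].
have hsup : has_sup S by split; [exists x0|exists z].
set t := sup S.
have tz : t <= z by apply: ge_sup => //; exists x0.
have tS : forall w, S w -> w <= t by move=> w Sw; apply: ub_le_sup => //; exists z.
have mI : forall a b : R, measurable (E `&` `[a, b]) by move=> a b; exact: measurableI.
have [tz'|zt] := ltrP t z.
  have eps0 : 0 < (z - t) / 2 by lra.
  have [e Se et] := sup_adherent eps0 hsup.
  rewrite -/t in et.
  have te := tS _ Se.
  case: Se => Ee /in_cc [ze ex0].
  exists e, (z - e); split => //.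
  - apply/andP; split; lra.
  - lra.
  - lra.
  - have -> : e + (z - e) = z by ring.
    apply: (le_lt_trans (le_mu (mI _ _) (measurable_itv `[e, t]) _)).
      move=> w [Ew /in_cc [ew wz]]; apply/in_cc; split => //.
      by apply: tS; split => //; apply/in_cc; split => //; exact: (le_trans ze ew).
    rewrite mu_cc ?lte_fin; lra.
have tz' : t = z by apply/eqP; rewrite eq_le tz zt.
have [s [s0 sh hs]] := dens_small mE dz h0.
have s20 : 0 < s / 2 by lra.
have [e Se et] := sup_adherent s20 hsup.
rewrite -/t tz' in et.
case: Se => Ee /in_cc [ze ex0].
have ze' : e < z.
  by rewrite lt_neqAle ex0 andbT; apply/negP => /eqP zx; apply: nEz; rewrite -zx.
exists e, (z - e + s / 2); split => //.
- apply/andP; split; lra.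
- lra.
- lra.
- apply: (le_lt_trans (le_mu (mI _ _) (measurableI _ _ mE (mball z s)) _)).
  + apply: setIS; rewrite ball_itv; apply: cc_oo; lra.
  + apply: (lt_trans hs); rewrite lte_fin; lra.
Qed.
End S5.
Section S6.
Context {R : realType}.
Local Notation mu := (@lebesgue_measure R).

Lemma nb_left (E : set R) (mE : measurable E) (y r y' : R) : 0 < r ->
  (mu (E `&` `[(y - r)%R, y]) < (r / 2)%:E)%E -> y - r / 8 <= y' -> y' <= y + r / 8 ->
  (mu (E `&` `[(y' - r)%R, y']) <= (r * 3 / 4)%:E)%E.
Proof.
move=> r0 h l1 l2.
have mI : forall a b : R, measurable (E `&` `[a, b]) by move=> a b; exact: measurableI.
apply: (le_trans (le_mu (mI _ _) (mI (y - r - r / 8) (y + r / 8)) _)).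
  by apply: setIS; apply: cc_cc; lra.
have ab : y - r - r / 8 <= y - r by lra.
have bc : y - r <= y by lra.
have cd : y <= y + r / 8 by lra.
apply: (le_trans (mu_sub3 mE ab bc cd)).
apply: (le_trans (leeD (ltW h) (lexx _))).
rewrite -EFinD lee_fin; lra.
Qed.

Lemma nb_right (E : set R) (mE : measurable E) (y r y' : R) : 0 < r ->
  (mu (E `&` `[y, (y + r)%R]) < (r / 2)%:E)%E -> y - r / 8 <= y' -> y' <= y + r / 8 ->
  (mu (E `&` `[y', (y' + r)%R]) <= (r * 3 / 4)%:E)%E.
Proof.
move=> r0 h l1 l2.
have mI : forall a b : R, measurable (E `&` `[a, b]) by move=> a b; exact: measurableI.
apply: (le_trans (le_mu (mI _ _) (mI (y - r / 8) (y + r + r / 8)) _)).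
  by apply: setIS; apply: cc_cc; lra.
have ab : y - r / 8 <= y by lra.
have bc : y <= y + r by lra.
have cd : y + r <= y + r + r / 8 by lra.
apply: (le_trans (mu_sub3 mE ab bc cd)).
apply: (le_trans (leeD (ltW h) (lexx _))).
rewrite -EFinD lee_fin; lra.
Qed.
End S6.
Section S7.
Context {R : realType}.
Local Notation mu := (@lebesgue_measure R).

Lemma minP3 (p q : R) :
  [/\ Num.min p q <= p, Num.min p q <= q & (0 < p -> 0 < q -> 0 < Num.min p q)].
Proof.
have := le_refl (Num.min p q); rewrite le_min => /andP[m1 m2]; split => //.
by move=> p0 q0; rewrite lt_min p0 q0.
Qed.

Lemma minE (p : R) : 0 < p -> forall q1 q2 : R, 0 < q1 -> 0 < q2 ->
  exists m, [/\ 0 < m, m <= p /\ m <= q1 /\ m <= q2 & m <= q1 / 2 /\ m <= q2 / 2].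
Proof.
move=> p0 q1 q2 q10 q20.
have [a1 a2 a3] := minP3 (q1 / 2) (q2 / 2).
have [b1 b2 b3] := minP3 p (Num.min (q1 / 2) (q2 / 2)).
exists (Num.min p (Num.min (q1 / 2) (q2 / 2))); split.
- by apply: b3 => //; apply: a3; lra.
- split => //; lra.
- lra.
Qed.

Lemma step (E : set R) (mE : measurable E) (wnd : weakly_nowhere_dense E)
  (O : set R) (oO : open O) (EO : E `<=` O) (a b rL rR : R) (n : nat) (x0 : R) :
  E x0 -> a < x0 -> x0 < b -> 0 < rL -> 0 < rR ->
  exists (a' b' rL' rR' x1 : R),
   [/\ [/\ a <= a', a' < b', b' <= b & `[a', b'] `<=` O],
       [/\ E x1, a' < x1 & x1 < b'],
       [/\ 0 < rL', rL' <= rL, rL' < n.+1%:R^-1 & forall w, a' <= w -> w <= b' ->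
          (mu (E `&` `[(w - rL')%R, w]) <= (rL' * 3 / 4)%:E)%E] &
       [/\ 0 < rR', rR' <= rR, rR' < n.+1%:R^-1 & forall w, a' <= w -> w <= b' ->
          (mu (E `&` `[w, (w + rR')%R]) <= (rR' * 3 / 4)%:E)%E]].
Proof.
move=> Ex0 ax0 x0b rL0 rR0.
have : nbhs x0 O by apply: open_nbhs_nbhs; split => //; exact: EO.
move/nbhs_ballP => [eta eta0 beta].
have n0 : 0 < n.+1%:R^-1 :> R by rewrite invr_gt0 ltr0n.
have [eta1 [eta10 [e1 [e1' e1'']] [e2 e2']]] := @minE eta eta0 (x0 - a) (b - x0) ltac:(lra) ltac:(lra).
have [rhoL [rhoL0 [l1 [l1' l1'']] [l2 l2']]] := @minE rL rL0 _ _ n0 n0.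
have [y [r [Ey yb r0 rrho hr]]] := core_left mE wnd Ex0 eta10 rhoL0.
move/andP: yb => [yb1 yb2].
have [del [del0 [d1 [d1' d1'']] [d2 d2']]] := @minE (r / 8) ltac:(lra) (y - (x0 - eta1)) ((x0 + eta1) - y) ltac:(lra) ltac:(lra).
have [rhoR [rhoR0 [k1 [k1' k1'']] [k2 k2']]] := @minE rR rR0 _ _ n0 n0.
have [y2 [r2 [Ey2 y2b r20 r2rho hr2]]] := core_right mE wnd Ey del0 rhoR0.
move/andP: y2b => [y2b1 y2b2].
have [del2 [del20 [f1 [f1' f1'']] [f2 f2']]] := @minE (r2 / 8) ltac:(lra) (y2 - (y - del)) ((y + del) - y2) ltac:(lra) ltac:(lra).
exists (y2 - del2), (y2 + del2), r, r2, y2; split.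
- split; [lra|lra|lra|].
  move=> w /in_cc [w1 w2]; apply: beta; rewrite ball_itv /= in_itv /=.
  apply/andP; split; lra.
- split => //; lra.
- split => //; [exact: (le_trans (ltW rrho) l1)|exact: (lt_le_trans rrho l1')|].
  move=> w w1 w2; apply: (nb_left mE r0 hr); lra.
- split => //; [exact: (le_trans (ltW r2rho) k1)|exact: (lt_le_trans r2rho k1')|].
  move=> w w1 w2; apply: (nb_right mE r20 hr2); lra.
Qed.
End S7.
Section S8.
Context {R : realType}.
Local Notation mu := (@lebesgue_measure R).

Lemma not_cvg1 (g : nat -> R) : g @ \oo --> (1 : R) -> (forall k, g k <= 3 / 4) -> False.
Proof.
move=> /cvgrPdist_lt H hg.
have q0 : (0 : R) < 1 / 4 by lra.
have [k hk] := filter_ex (H _ q0).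
move: hk; rewrite ltr_norml => /andP[h1 h2].
have := hg k; lra.
Qed.

Lemma cvg0_inv (r : nat -> R) : (forall k, 0 < r k) -> (forall k, r k < k.+1%:R^-1) ->
  r @ \oo --> (0 : R).
Proof.
move=> r0 rk; apply/cvgrPdist_lt => e e0.
apply: filterS (near_infty_natSinv_lt (PosNum e0)) => k hk.
rewrite sub0r normrN ger0_norm; last exact: ltW.
exact: (lt_trans (rk k)).
Qed.

Lemma ratio_le (A : set R) (mA : measurable A) (r : R) : 0 < r ->
  (mu A <= (r * 3 / 4)%:E)%E -> fine (mu A) / r <= 3 / 4.
Proof.
move=> r0 h.
have fm : mu A \is a fin_num.
  rewrite ge0_fin_numE //; apply: (le_lt_trans h); exact: ltry.
move: h; rewrite -(fineK fm) lee_fin => h.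
rewrite ler_pdivrMr //; lra.
Qed.

End S8.
Lemma main_aux (R : realType) (E : set R) :
  E !=set0 -> weakly_nowhere_dense E -> Gdelta E ->
  exists x, E x /\ ~ left_density_point E x /\ ~ right_density_point E x.
Proof.
move=> [x0 Ex0] wnd GE.
have mE := Gdelta_measurable GE.
case: GE => O oO EO.
have EOn : forall n, E `<=` O n.
  by move=> n y; rewrite EO; move=> hy; exact: (hy n I).
pose P (s : R * R * R * R) := [/\ exists x, [/\ E x, s.1.1.1 < x & x < s.1.1.2],
   0 < s.1.2 & 0 < s.2].
pose Q (n : nat) (s s' : R * R * R * R) :=
   [/\ [/\ s.1.1.1 <= s'.1.1.1, s'.1.1.1 < s'.1.1.2, s'.1.1.2 <= s.1.1.2 &
          `[s'.1.1.1, s'.1.1.2] `<=` O n],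
       [/\ 0 < s'.1.2, s'.1.2 <= s.1.2, s'.1.2 < n.+1%:R^-1 & forall w, s'.1.1.1 <= w -> w <= s'.1.1.2 ->
          (lebesgue_measure (E `&` `[(w - s'.1.2)%R, w]) <= (s'.1.2 * 3 / 4)%:E)%E] &
       [/\ 0 < s'.2, s'.2 <= s.2, s'.2 < n.+1%:R^-1 & forall w, s'.1.1.1 <= w -> w <= s'.1.1.2 ->
          (lebesgue_measure (E `&` `[w, (w + s'.2)%R]) <= (s'.2 * 3 / 4)%:E)%E]].
have hstep : forall ns : nat * (R * R * R * R), exists s', P ns.2 -> P s' /\ Q ns.1 ns.2 s'.
  move=> [n [[[a b] rL] rR]] /=.
  case: (pselect (P (a, b, rL, rR))); last by move=> nP; exists (a, b, rL, rR).
  move=> [[x [Ex ax xb]] /= rL0 rR0].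
  have [a' [b' [rL' [rR' [x1 [[h1 h2 h3 h4] [h5 h6 h7] [h8 h9 h10 h11] [h12 h13 h14 h15]]]]]]] :=
    step mE wnd (oO n) (EOn n) n Ex ax xb rL0 rR0.
  exists (a', b', rL', rR') => _; split; first by split => //; exists x1.
  by split.
have [f hf] := choice hstep.
pose s := fix g n := match n with 0 => (x0 - 1, x0 + 1, 1, 1) | k.+1 => f (k, g k) end.
have sS : forall n, s n.+1 = f (n, s n) by [].
have Ps : forall n, P (s n).
  elim => [|n IH]; first by split => //=; exists x0; split => //; lra.
  by rewrite sS; case: (hf (n, s n) IH).
have Qs : forall n, Q n (s n) (s n.+1).
  by move=> n; rewrite sS; case: (hf (n, s n) (Ps n)).
pose A n := (s n).1.1.1.
pose B n := (s n).1.1.2.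
have AB : forall n, A n < B n.
  move=> n; case: (Ps n) => [[x [_ h1 h2]] _ _]; exact: (lt_trans h1 h2).
have Ainc : forall n m, (n <= m)%N -> A n <= A m.
  move=> n; elim => [|m IH]; first by rewrite leqn0 => /eqP ->.
  rewrite leq_eqVlt => /orP [/eqP -> //|/IH h].
  by case: (Qs m) => [[q1 _ _ _] _ _]; exact: (le_trans h q1).
have Bdec : forall n m, (n <= m)%N -> B m <= B n.
  move=> n; elim => [|m IH]; first by rewrite leqn0 => /eqP ->.
  rewrite leq_eqVlt => /orP [/eqP -> //|/IH h].
  by case: (Qs m) => [[_ _ q3 _] _ _]; exact: (le_trans q3 h).
have AleB : forall n m, A n <= B m.
  move=> n m; apply: (le_trans (Ainc n (maxn n m) (leq_maxl _ _))).
  apply: (le_trans (ltW (AB _))); exact: Bdec (leq_maxr _ _).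
set x := sup (range A).
have ne : range A !=set0 by exists (A 0%N), 0%N.
have Ax : forall n, A n <= x.
  move=> n; apply: ub_le_sup; last by exists n.
  by exists (B 0%N) => _ [m _ <-]; exact: AleB.
have xB : forall n, x <= B n.
  by move=> n; apply: ge_sup => // _ [m _ <-]; exact: AleB.
have Ex : E x.
  rewrite EO => n _.
  by case: (Qs n) => [[_ _ _ q4] _ _]; apply: q4; apply/in_cc; split; [exact: Ax|exact: xB].
exists x; split => //; split.
- move=> hL.
  pose r k := (s k.+1).1.2.
  have r0 : forall k, 0 < r k by move=> k; case: (Qs k) => [_ [q1 _ _ _] _].
  have rinc : nonincreasing_seq r.
    apply/nonincreasing_seqP => k; rewrite /r.
    by case: (Qs k.+1) => [_ [_ q2 _ _] _].
  have rcvg : r @ \oo --> (0 : R).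
    by apply: cvg0_inv => // k; case: (Qs k) => [_ [_ _ q3 _] _].
  apply: (not_cvg1 (hL r r0 rinc rcvg)) => k.
  apply: ratio_le => //; first exact: measurableI.
  by case: (Qs k) => [_ [_ _ _ q4] _]; apply: q4; [exact: Ax|exact: xB].
- move=> hR.
  pose r k := (s k.+1).2.
  have r0 : forall k, 0 < r k by move=> k; case: (Qs k) => [_ _ [q1 _ _ _]].
  have rinc : nonincreasing_seq r.
    apply/nonincreasing_seqP => k; rewrite /r.
    by case: (Qs k.+1) => [_ _ [_ q2 _ _]].
  have rcvg : r @ \oo --> (0 : R).
    by apply: cvg0_inv => // k; case: (Qs k) => [_ _ [_ _ q3 _]].
  apply: (not_cvg1 (hR r r0 rinc rcvg)) => k.
  apply: ratio_le => //; first exact: measurableI.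
  by case: (Qs k) => [_ _ [_ _ _ q4]]; apply: q4; [exact: Ax|exact: xB].
Qed.
Unset Implicit Arguments.
Local Close Scope ring_scope.
Local Open Scope classical_set_scope.

Theorem corollary3p5 (R : realType) (E : set R) :
  E !=set0 -> weakly_nowhere_dense E -> Gdelta E ->
  exists x, E x /\ ~ left_density_point E x /\ ~ right_density_point E x.
Proof. exact: main_aux. Qed.
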